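(* Let $R$ be a von Neumann regular ring. (1) A finitely generated $R$-module has a pure-composition series with indecomposable cyclic factors if and only if it is semisimple. (2) Every finitely generated $R$-module has a pure-composition series with indecomposable cyclic factors if and only if $R$ is a semisimple ring.
   Context: All rings are commutative with identity. A pure-composition series of $M$ is a finite chain $\{0\}=M_0\subset\dots\subset M_n=M$ of pure submodules (inclusion stays injective after tensoring with any module); its factors are $M_i/M_{i-1}$. *)

(* Defs.v *)
From HB Require Import structures.
From mathcomp Require Import all_boot all_order all_algebra.
Set Implicit Arguments. Unset Strict Implicit. Unset Printing Implicit Defensive.
Import Order.TTheory GRing.Theory Num.Theory.
Local Open Scope ring_scope.

Definition vN_regular (R : comPzRingType) : Prop :=
  forall a : R, exists x : R, a = a * x * a.

Section Mods.
Variable R : comPzRingType.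

Definition submodule (M : lmodType R) (S : M -> Prop) : Prop :=
  [/\ S 0, (forall x y, S x -> S y -> S (x + y)) &
      (forall (r : R) x, S x -> S (r *: x))].

Definition fin_gen (M : lmodType R) : Prop :=
  exists g : seq M, forall m : M,
    exists c : seq R, size c = size g /\
      m = \sum_(i < size g) c`_i *: g`_i.

Definition bilinear_on (M N P : lmodType R) (A : M -> Prop)
    (beta : M -> N -> P) : Prop :=
  [/\ (forall a a' n, A a -> A a' -> beta (a + a') n = beta a n + beta a' n),
      (forall (r : R) a n, A a -> beta (r *: a) n = r *: beta a n),
      (forall a n n', A a -> beta a (n + n') = beta a n + beta a n') &
      (forall (r : R) a n, A a -> beta a (r *: n) = r *: beta a n)].

(* The element  sum_i a_i (x) n_i  of  A (x)_R N  is zero, where A is a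
   submodule of M; by the universal property of the tensor product this
   holds iff every R-bilinear map on A x N kills the sum. *)
Definition tensor_zero (M N : lmodType R) (A : M -> Prop) (s : seq (M * N))
  : Prop :=
  forall (P : lmodType R) (beta : M -> N -> P), bilinear_on A beta ->
    \sum_(p <- s) beta p.1 p.2 = 0.

(* A pure in M: for every module N, the map A (x) N -> M (x) N is injective,
   i.e. any element of A (x) N (all of the form sum a_i (x) n_i with a_i in A)
   which vanishes in M (x) N already vanishes in A (x) N. *)
Definition pure_sub (M : lmodType R) (A : M -> Prop) : Prop :=
  submodule A /\
  forall (N : lmodType R) (s : seq (M * N)),
    (forall p, p \in s -> A p.1) ->
    tensor_zero (fun _ : M => True) s -> tensor_zero A s.

Definition factor_cyclic (M : lmodType R) (B C : M -> Prop) : Prop :=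
  exists m : M, C m /\
    forall x, C x <-> exists (r : R) (y : M), B y /\ x = r *: m + y.

(* Submodules of C/B are
   described (correspondence theorem) as submodules D with B <= D <= C. *)
Definition factor_indecomposable (M : lmodType R) (B C : M -> Prop) : Prop :=
  (exists x, C x /\ ~ B x) /\
  ~ exists D E : M -> Prop,
      [/\ submodule D /\ submodule E,
          ((forall x, B x -> D x) /\ (forall x, D x -> C x)) /\
          ((forall x, B x -> E x) /\ (forall x, E x -> C x)),
          (forall x, C x -> exists d e, [/\ D d, E e & x = d + e]),
          (forall x, D x -> E x -> B x) &
          (exists x, D x /\ ~ B x) /\ (exists x, E x /\ ~ B x)].

Definition has_pure_comp_series_indec_cyclic (M : lmodType R) : Prop :=
  exists (n : nat) (S : nat -> M -> Prop),
    [/\ (forall x, S 0%N x <-> x = 0),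
        (forall x, S n x),
        (forall i, (i <= n)%N -> pure_sub (S i)),
        (forall i, (i < n)%N -> forall x, S i x -> S i.+1 x) &
        (forall i, (i < n)%N ->
           factor_cyclic (S i) (S i.+1) /\ factor_indecomposable (S i) (S i.+1))].

Definition semisimple_mod (M : lmodType R) : Prop :=
  forall A : M -> Prop, submodule A ->
    exists B : M -> Prop, [/\ submodule B,
      (forall x, exists a b, [/\ A a, B b & x = a + b]) &
      (forall x, A x -> B x -> x = 0)].

End Mods.

Definition semisimple_ring (R : comPzRingType) : Prop := semisimple_mod (R^o).

(* Main.v *)
Require Import Defs.
From HB Require Import structures.
From mathcomp Require Import all_boot all_order all_algebra.
From mathcomp Require Import ring.
From Stdlib Require Import Classical ClassicalEpsilon FunctionalExtensionality PropExtensionality.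
Set Implicit Arguments. Unset Strict Implicit. Unset Printing Implicit Defensive.
Import Order.TTheory GRing.Theory Num.Theory.
Local Open Scope ring_scope.

Definition zero {R : comPzRingType} {M : lmodType R} : M -> Prop := fun x => x = 0.
Definition addc {R : comPzRingType} {M : lmodType R} (B : M -> Prop) (d : M) : M -> Prop :=
  fun x => exists (r : R) (y : M), B y /\ x = r *: d + y.
Fixpoint spanB {R : comPzRingType} {M : lmodType R} (B : M -> Prop) (c : seq M) : M -> Prop :=
  if c is d :: c' then spanB (addc B d) c' else B.
Definition sub {T : Type} (A B : T -> Prop) := forall x, A x -> B x.

Lemma predE {T : Type} (A B : T -> Prop) : (forall x, A x <-> B x) -> A = B.
Proof. move=> h; apply: functional_extensionality => x; apply: propositional_extensionality; exact: h. Qed.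

Lemma subN (R : comPzRingType) (M : lmodType R) (S : M -> Prop) : submodule S ->
  forall x, S x -> S (- x).
Proof. move=> hS x hx; have [_ _ hZ] := hS; rewrite -scaleN1r; exact: hZ. Qed.

Lemma subB (R : comPzRingType) (M : lmodType R) (S : M -> Prop) : submodule S ->
  forall x y, S x -> S y -> S (x - y).
Proof. move=> hS x y hx hy; have [_ hD _] := hS; apply: hD => //; exact: subN. Qed.

Lemma sub0 (R : comPzRingType) (M : lmodType R) (S : M -> Prop) : submodule S -> S 0.
Proof. by move=> hS; have [] := hS. Qed.
Lemma subD (R : comPzRingType) (M : lmodType R) (S : M -> Prop) : submodule S ->
  forall x y, S x -> S y -> S (x + y).
Proof. by move=> hS; have [] := hS. Qed.
Lemma subZ (R : comPzRingType) (M : lmodType R) (S : M -> Prop) : submodule S ->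
  forall (r : R) x, S x -> S (r *: x).
Proof. by move=> hS; have [] := hS. Qed.

Lemma zero_sub (R : comPzRingType) (M : lmodType R) : submodule (@zero R M).
Proof.
split; rewrite /zero //.
- by move=> x y -> ->; rewrite addr0.
- by move=> r x ->; rewrite scaler0.
Qed.

Lemma addc_sub (R : comPzRingType) (M : lmodType R) (B : M -> Prop) d :
  submodule B -> submodule (addc B d).
Proof.
move=> hB; split.
- exists 0, 0; split; first exact: sub0 hB.
  by rewrite scale0r addr0.
- move=> x y [r [u [hu ->]]] [s [v [hv ->]]].
  exists (r + s), (u + v); split; first exact: subD.
  by rewrite scalerDl addrACA.
- move=> s x [r [u [hu ->]]]; exists (s * r), (s *: u); split; first exact: subZ.
  by rewrite scalerDr scalerA.
Qed.

Lemma addc_incl (R : comPzRingType) (M : lmodType R) (B : M -> Prop) d : sub B (addc B d).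
Proof. move=> y hy; exists 0, y; split => //; by rewrite scale0r add0r. Qed.

Lemma addc_d (R : comPzRingType) (M : lmodType R) (B : M -> Prop) d :
  submodule B -> addc B d d.
Proof. move=> hB; exists 1, 0; split; first exact: sub0 hB. by rewrite scale1r addr0. Qed.

Lemma addc_mono (R : comPzRingType) (M : lmodType R) (B B' : M -> Prop) d :
  sub B B' -> sub (addc B d) (addc B' d).
Proof. move=> h x [r [y [hy ->]]]; exists r, y; split => //; exact: h. Qed.

Lemma spanB_sub (R : comPzRingType) (M : lmodType R) (c : seq M) (B : M -> Prop) :
  submodule B -> submodule (spanB B c).
Proof. elim: c B => [|d c IH] B hB //=; apply: IH; exact: addc_sub. Qed.

Lemma spanB_incl (R : comPzRingType) (M : lmodType R) (c : seq M) (B : M -> Prop) :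
  sub B (spanB B c).
Proof.
elim: c B => [|d c IH] B //= x hx; apply: IH; exact: addc_incl.
Qed.

Lemma spanB_mono (R : comPzRingType) (M : lmodType R) (c : seq M) (B B' : M -> Prop) :
  sub B B' -> sub (spanB B c) (spanB B' c).
Proof. elim: c B B' => [|d c IH] B B' h //=; apply: IH; exact: addc_mono. Qed.

Lemma spanB_cat (R : comPzRingType) (M : lmodType R) (c1 c2 : seq M) (B : M -> Prop) :
  spanB B (c1 ++ c2) = spanB (spanB B c1) c2.
Proof. by elim: c1 B => [|d c IH] B //=. Qed.

Lemma spanB_mem (R : comPzRingType) (M : lmodType R) (c : seq M) (B : M -> Prop) d :
  submodule B -> d \in c -> spanB B c d.
Proof.
elim: c B => [|e c IH] B hB //=; rewrite inE => /orP [/eqP ->|hd].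
- apply: spanB_incl; exact: addc_d.
- apply: IH => //; exact: addc_sub.
Qed.

Lemma spanB_min (R : comPzRingType) (M : lmodType R) (c : seq M) (B S : M -> Prop) :
  submodule S -> sub B S -> (forall d, d \in c -> S d) -> sub (spanB B c) S.
Proof.
move=> hS; elim: c B => [|e c IH] B hB hc //=; apply: IH.
- move=> x [r [y [hy ->]]]; apply: subD => //; last exact: hB.
  apply: subZ => //; apply: hc; exact: mem_head.
- move=> d hd; apply: hc; by rewrite inE hd orbT.
Qed.

Definition mx {R : comPzRingType} (I : R -> Prop) :=
  ~ I 1 /\ forall r, ~ I r -> exists s, I (1 - s * r).
Definition good {R : comPzRingType} {M : lmodType R} (B : M -> Prop) (d : M) :=
  ~ B d /\ exists I : R -> Prop, mx I /\ forall r, I r -> B (r *: d).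
Fixpoint chain {R : comPzRingType} {M : lmodType R} (B : M -> Prop) (c : seq M) : Prop :=
  if c is d :: c' then good B d /\ chain (addc B d) c' else True.
Fixpoint hyp {R : comPzRingType} {M : lmodType R} (B : M -> Prop) (c : seq M) : Prop :=
  if c is d :: c' then (exists I : R -> Prop, mx I /\ forall r, I r -> B (r *: d))
     /\ hyp (addc B d) c' else True.

Lemma chain_cat (R : comPzRingType) (M : lmodType R) (c1 c2 : seq M) (B : M -> Prop) :
  chain B (c1 ++ c2) <-> chain B c1 /\ chain (spanB B c1) c2.
Proof. elim: c1 B => [|d c IH] B /=; first tauto. rewrite IH; tauto. Qed.

Lemma hyp_cat (R : comPzRingType) (M : lmodType R) (c1 c2 : seq M) (B : M -> Prop) :
  hyp B (c1 ++ c2) <-> hyp B c1 /\ hyp (spanB B c1) c2.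
Proof. elim: c1 B => [|d c IH] B /=; first tauto. rewrite IH; tauto. Qed.

Lemma hyp_mono (R : comPzRingType) (M : lmodType R) (c : seq M) (B B' : M -> Prop) :
  sub B B' -> hyp B c -> hyp B' c.
Proof.
elim: c B B' => [|d c IH] B B' hBB' //= [[I [hI hIB]] hc]; split.
- exists I; split => // r hr; apply: hBB'; exact: hIB.
- apply: (IH (addc B d)) => //; exact: addc_mono.
Qed.

Lemma good_ann (R : comPzRingType) (M : lmodType R) (B : M -> Prop) d :
  good B d -> mx (fun r : R => B (r *: d)).
Proof.
move=> [hd [I [[hI1 hI] hIB]]]; split; first by rewrite scale1r.
move=> r hr; have hIr : ~ I r by move=> h; apply: hr; exact: hIB.
have [s hs] := hI r hIr; exists s; exact: hIB.
Qed.

Lemma good_indec (R : comPzRingType) (M : lmodType R) (B : M -> Prop) d :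
  submodule B -> good B d -> factor_indecomposable B (addc B d).
Proof.
move=> hB hg; have [hd _] := hg; have [_ hann] := good_ann hg.
have key : forall X : M -> Prop, submodule X -> sub B X -> sub X (addc B d) ->
    (exists x, X x /\ ~ B x) -> X d.
  move=> X hX hBX hXC [x [hXx hBx]].
  have [r [y [hy ex]]] := hXC x hXx.
  have hr : ~ B (r *: d) by move=> h; apply: hBx; rewrite ex; exact: subD.
  have [s hs] := hann r hr.
  have -> : d = s *: (x - y) + (1 - s * r) *: d.
    by rewrite ex addrK scalerA -scalerDl addrC subrK scale1r.
  apply: subD => //; last exact: hBX.
  apply: subZ => //; apply: subB => //; exact: hBX.
split; first by exists d; split => //; exact: addc_d.
move=> [D [E [[hD hE] [[hBD hDC] [hBE hEC]] hcov hcap [hDn hEn]]]].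
apply: hd; apply: hcap; exact: key.
Qed.

Lemma indec_good (R : comPzRingType) (hR : vN_regular R) (M : lmodType R) (A : M -> Prop) m :
  submodule A -> factor_indecomposable A (addc A m) -> good A m.
Proof.
move=> hA [[x [hCx hAx]] hnot].
have nAm : ~ A m.
  move=> h; apply: hAx; case: hCx => r [y [hy ->]]; apply: subD => //; exact: subZ.
split => //; exists (fun r => A (r *: m)); split => //; split; first by rewrite scale1r.
move=> r hr; apply: NNPP => hno.
have [x0 hx0] := hR r; set e := r * x0.
have ee : e * e = e by rewrite /e mulrA -hx0.
have er : e * r = r by rewrite /e -hx0.
apply: hnot; exists (addc A (e *: m)), (addc A ((1 - e) *: m)); split.
- split; exact: addc_sub.
- split; split.
  + exact: addc_incl.
  + by move=> z [t [y [hy ->]]]; exists (t * e), y; rewrite scalerA.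
  + exact: addc_incl.
  + by move=> z [t [y [hy ->]]]; exists (t * (1 - e)), y; rewrite scalerA.
- move=> z [t [y [hy ->]]].
  exists (t *: (e *: m) + y), (t *: ((1 - e) *: m)); split.
  + by exists t, y.
  + exists t, 0; split; [exact: sub0 | by rewrite addr0].
  + by rewrite !scalerA addrAC -scalerDl mulrBr mulr1 (addrC (t * e)) subrK.
- move=> z [t [y [hy ->]]] [u [y' [hy' Heq]]].
  have := congr1 (fun v => e *: v) Heq; rewrite /= !scalerDr !scalerA.
  have -> : e * t * e = t * e by rewrite -mulrA mulrCA ee.
  have -> : e * u * (1 - e) = 0 by rewrite -mulrA mulrCA mulrBr mulr1 ee subrr mulr0.
  rewrite scale0r add0r => /(canRL (addrK _)) h.
  apply: subD => //; rewrite h; apply: subB => //; exact: subZ.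
- split.
  + exists (e *: m); split; first exact: addc_d.
    move=> h; apply: hr; have -> : r *: m = r *: (e *: m) by rewrite scalerA mulrC er.
    exact: subZ.
  + exists ((1 - e) *: m); split; first exact: addc_d.
    move=> h; apply: hno; exists x0; by rewrite mulrC -/e.
Qed.

Definition spanl {R : comPzRingType} {M : lmodType R} (c : seq M) : M -> Prop := spanB zero c.

Definition rel_ss {R : comPzRingType} {M : lmodType R} (X : M -> Prop) :=
  forall N, submodule N -> sub N X -> exists C, [/\ submodule C, sub C X,
    (forall x, X x -> exists a b, [/\ N a, C b & x = a + b]) &
    (forall x, N x -> C x -> x = 0)].

Lemma rel_ss0 (R : comPzRingType) (M : lmodType R) : rel_ss (@zero R M).
Proof.
move=> N hN hNs; exists zero; split => //; first exact: zero_sub.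
- move=> x ->; exists 0, 0; split => //; [exact: sub0 | by rewrite addr0].
Qed.

Lemma dec_span (R : comPzRingType) (M : lmodType R) (B C : M -> Prop) (g : seq M) :
  submodule B -> submodule C ->
  (forall h, h \in g -> exists b, B b /\ C (h - b)) ->
  exists p : seq M, sub (spanl p) B /\
    forall x, spanl g x -> exists y z, [/\ spanl p y, C z & x = y + z].
Proof.
move=> hB hC hg.
pose f := fun h : M => epsilon (inhabits (0 : M)) (fun b => B b /\ C (h - b)).
have hf : forall h, h \in g -> B (f h) /\ C (h - f h).
  by move=> h hh; apply: (epsilon_spec (inhabits (0 : M)) (fun b => B b /\ C (h - b))); exact: hg.
exists (map f g); split.
- apply: spanB_min => //; first by move=> x ->; exact: sub0.
  by move=> d /mapP [h hh ->]; have [] := hf h hh.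
- pose T := fun x => exists y z, [/\ spanl (map f g) y, C z & x = y + z].
  have hsp : submodule (spanl (map f g)) by apply: spanB_sub; exact: zero_sub.
  have hT : submodule T.
    split.
    + exists 0, 0; split; [exact: sub0 hsp | exact: sub0 | by rewrite addr0].
    + move=> x x' [y [z [hy hz ->]]] [y' [z' [hy' hz' ->]]].
      exists (y + y'), (z + z'); split; [exact: subD hsp _ _ hy hy' | exact: subD hC _ _ hz hz' | by rewrite addrACA].
    + move=> r x [y [z [hy hz ->]]]; exists (r *: y), (r *: z); split;
        [exact: subZ hsp r _ hy | exact: subZ hC r _ hz | by rewrite scalerDr].
  apply: spanB_min => //; first by move=> x ->; exists 0, 0; split; [exact: sub0 hsp | exact: sub0 | by rewrite addr0].
  move=> h hh; exists (f h), (h - f h); split.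
  + apply: spanB_mem; [exact: zero_sub | exact: map_f].
  + by have [] := hf h hh.
  + by rewrite addrC subrK.
Qed.

Lemma e_lemma (R : comPzRingType) (hR : vN_regular R) (M : lmodType R) (A : M -> Prop) d (p : seq M) :
  submodule A -> (forall q, q \in p -> exists r, A (r *: d) /\ q = r *: d) ->
  exists e : R, A (e *: d) /\ forall q, q \in p -> e *: q = q.
Proof.
move=> hA; elim: p => [|q p IH] hp.
  by exists 0; split => //; rewrite scale0r; exact: sub0.
have [e [hAe he]] : exists e : R, A (e *: d) /\ forall q, q \in p -> e *: q = q.
  by apply: IH => q' hq'; apply: hp; rewrite inE hq' orbT.
have [r [hAr eqq]] := hp q (mem_head _ _).
pose r' := r - r * e. have [x hx] := hR r'. pose f0 := x * r'.
have hAf : A (f0 *: d).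
  have -> : f0 *: d = x *: (r *: d - r *: (e *: d)) by rewrite /f0 /r' -scalerA scalerBl scalerA.
  apply: subZ => //; apply: subB => //; exact: subZ.
exists (e + f0 - e * f0); split.
  rewrite scalerBl scalerDl -[(e * f0) *: d]scalerA; apply: subB => //; [exact: subD hA _ _ hAe hAf | exact: subZ hA _ _ hAf].
move=> q'; rewrite inE => /orP [/eqP ->|hq'].
  rewrite eqq scalerA; congr (_ *: _).
  have h1 : (e + f0 - e * f0) * r = e * r + r' * x * r' by rewrite /f0 /r'; ring.
  by rewrite h1 -hx /r'; ring.
have E : e *: q' = q' by exact: he.
rewrite scalerBl scalerDl.
set u := (X in X + _ - _).
have Eu : u = q' by rewrite /u; exact: E.
rewrite Eu.
set w := (X in _ - X).
have Ew : w = f0 *: q'.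
  by rewrite /w mulrC -scalerA; congr (_ *: _); exact: E.
by rewrite Ew addrK.
Qed.

Lemma ss_step (R : comPzRingType) (hR : vN_regular R) (M : lmodType R) (A : M -> Prop) d (g : seq M) :
  submodule A -> rel_ss A -> (forall x, A x <-> spanl g x) -> good A d -> rel_ss (addc A d).
Proof.
move=> hA hss hAg hg.
have hann := good_ann hg.
pose Im := fun x : M => exists r, A (r *: d) /\ x = r *: d.
have hIm : submodule Im.
  split.
  - exists 0; rewrite scale0r; split => //; exact: sub0.
  - move=> x y [r [hr ->]] [s [hs ->]]; exists (r + s); rewrite scalerDl; split => //; exact: subD.
  - move=> t x [r [hr ->]]; exists (t * r); rewrite -scalerA; split => //; exact: subZ.
have ImA : sub Im A by move=> x [r [hr ->]].
have [A' [hA' hA'A hdec hcap]] := hss Im hIm ImA.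
have [p [hpIm hgp]] : exists p : seq M, sub (spanl p) Im /\
    forall x, spanl g x -> exists y z, [/\ spanl p y, A' z & x = y + z].
  apply: dec_span => // h hh.
  have : A h by apply/hAg; apply: spanB_mem => //; exact: zero_sub.
  by move=> /hdec [a [b [ha hb ->]]]; exists a; split => //; rewrite addrC addKr.
have ImP : forall x, Im x -> spanl p x.
  move=> x hx; have [y [z [hy hz ex]]] := hgp x (proj1 (hAg x) (ImA x hx)).
  have z0 : z = 0.
    apply: hcap => //; have -> : z = x - y by rewrite ex addrC addKr.
    apply: subB => //; exact: hpIm.
  by rewrite ex z0 addr0.
have [e [hAe he]] : exists e : R, A (e *: d) /\ forall q, q \in p -> e *: q = q.
  apply: e_lemma => // q hq; apply: hpIm; apply: spanB_mem => //; exact: zero_sub.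
have heS : forall y, spanl p y -> e *: y = y.
  pose S := fun y : M => e *: y = y.
  have hS : submodule S.
    split; rewrite /S.
    - by rewrite scaler0.
    - by move=> x y hx hy; rewrite scalerDr hx hy.
    - by move=> r x hx; rewrite scalerA mulrC -scalerA hx.
  apply: spanB_min => //; first by move=> x ->; rewrite /S scaler0.
pose d' := d - e *: d.
have kill : forall r, A (r *: d') -> r *: d' = 0.
  move=> r hr.
  have hrd : A (r *: d).
    have -> : r *: d = r *: d' + r *: (e *: d) by rewrite /d' scalerBr subrK.
    apply: subD => //; exact: subZ.
  have := heS _ (ImP _ (ex_intro _ r (conj hrd erefl))).
  rewrite /d' scalerBr scalerA mulrC -scalerA => ->; exact: subrr.
have addcE : addc A d = addc A d'.
  apply: predE => x; split => [[r [y [hy ->]]]|[r [y [hy ->]]]].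
  - exists r, (y + r *: (e *: d)); split; first by apply: subD => //; exact: subZ.
    by rewrite /d' scalerBr addrCA subrK addrC.
  - exists r, (y - r *: (e *: d)); split; first by apply: subB => //; exact: subZ.
    by rewrite /d' scalerBr addrAC addrA.
rewrite addcE => N hN hNs.
have [[x0 [hNx0 hAx0]]|hNA] : (exists x, N x /\ ~ A x) \/ sub N A.
  have [h|h] := classic (exists x, N x /\ ~ A x); [by left | right => x hx].
  by apply: NNPP => hx'; apply: h; exists x.
- have [r0 [a0 [ha0 ex0]]] := hNs x0 hNx0.
  have hr0 : ~ A (r0 *: d).
    move=> h; apply: hAx0; rewrite ex0; apply: subD => //.
    rewrite /d' scalerBr; apply: subB => //; exact: subZ.
  have [s hs] := hann.2 r0 hr0.
  have hd' : d' = s *: (x0 - a0).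
    have : (1 - s * r0) *: d' = 0.
      apply: kill; rewrite /d' scalerBr; apply: subB => //; exact: subZ.
    rewrite scalerBl scale1r => /eqP; rewrite subr_eq0 => /eqP ->.
    by rewrite ex0 addrK scalerA.
  pose NA := fun x => N x /\ A x.
  have hNA : submodule NA.
    split.
    - split; [exact: sub0 | exact: sub0].
    - move=> x y [h1 h2] [h3 h4]; split; exact: subD.
    - move=> r x [h1 h2]; split; exact: subZ.
  have [A'' [hA'' hA''A hdec2 hcap2]] := hss NA hNA (fun x h => h.2).
  exists A''; split => //.
  + move=> x hx; apply: addc_incl; exact: hA''A.
  + move=> x [r [a [ha ->]]].
    have hA1 : A (a - (r * s) *: a0) by apply: subB => //; exact: subZ.
    have [n1 [a'' [[hn1N hn1A] ha'' ex1]]] := hdec2 _ hA1.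
    exists ((r * s) *: x0 + n1), a''; split => //.
    * apply: subD => //; exact: subZ.
    * rewrite -addrA -ex1 hd' scalerA scalerBr.
      by rewrite addrAC addrA.
  + move=> x hx hx''; apply: hcap2 => //; split => //; exact: hA''A.
- have [A'' [hA'' hA''A hdec2 hcap2]] := hss N hN hNA.
  exists (addc A'' d'); split.
  + exact: addc_sub.
  + exact: addc_mono.
  + move=> x [r [a [ha ->]]]; have [n [a'' [hn ha'' ->]]] := hdec2 a ha.
    exists n, (r *: d' + a''); split => //; first by exists r, a''.
    by rewrite addrCA.
  + move=> x hx [r [a'' [ha'' ex]]].
    have hrd : A (r *: d').
      have -> : r *: d' = x - a'' by rewrite ex addrK.
      apply: subB => //; [exact: hNA | exact: hA''A].
    have h0 := kill r hrd.
    rewrite ex h0 add0r in hx *; exact: hcap2.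
Qed.

Lemma chain_ss (R : comPzRingType) (hR : vN_regular R) (M : lmodType R) (c : seq M) :
  chain zero c -> rel_ss (spanl c).
Proof.
elim/last_ind: c => [|c d IH]; first by move=> _; exact: rel_ss0.
rewrite -cats1 chain_cat /spanl spanB_cat /= => [[hc [hg _]]].
apply: (ss_step hR (g := c)) => //.
- apply: spanB_sub; exact: zero_sub.
- exact: IH.
Qed.

Lemma ss_pure (R : comPzRingType) (M : lmodType R) (hss : semisimple_mod M) (A : M -> Prop) :
  submodule A -> pure_sub A.
Proof.
move=> hA; split => // N s hsA hT P beta [b1 b2 b3 b4].
have [C [hC hdec hcap]] := hss A hA.
pose pi := fun x : M => epsilon (inhabits (0:M)) (fun a => A a /\ C (x - a)).
have hpi : forall x, A (pi x) /\ C (x - pi x).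
  move=> x; apply: (epsilon_spec (inhabits (0:M)) (fun a => A a /\ C (x - a))).
  by have [a [b [ha hb ->]]] := hdec x; exists a; split => //; rewrite addrC addKr.
have uniq : forall x a, A a -> C (x - a) -> pi x = a.
  move=> x a ha hc; have [h1 h2] := hpi x.
  apply/eqP; rewrite -subr_eq0; apply/eqP; apply: hcap.
  - exact: subB.
  - have -> : pi x - a = (x - a) - (x - pi x).
      by rewrite [in RHS]opprB [in RHS]addrC [in RHS]addrA subrK.
    exact: subB.
have piA : forall a, A a -> pi a = a.
  by move=> a ha; apply: uniq => //; rewrite subrr; exact: sub0.
have piD : forall x y, pi (x + y) = pi x + pi y.
  move=> x y; apply: uniq; first by apply: subD => //; [exact: (hpi x).1 | exact: (hpi y).1].
  rewrite opprD addrACA; apply: subD => //; [exact: (hpi x).2 | exact: (hpi y).2].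
have piZ : forall (r : R) x, pi (r *: x) = r *: pi x.
  move=> r x; apply: uniq; first by apply: subZ => //; exact: (hpi x).1.
  rewrite -scalerBr; apply: subZ => //; exact: (hpi x).2.
pose beta' := fun m n => beta (pi m) n.
have hb' : bilinear_on (fun _ : M => True) beta'.
  split; rewrite /beta'.
  - by move=> a a' n _ _; rewrite piD b1 //; [exact: (hpi a).1 | exact: (hpi a').1].
  - by move=> r a n _; rewrite piZ b2 //; exact: (hpi a).1.
  - by move=> a n n' _; rewrite b3 //; exact: (hpi a).1.
  - by move=> r a n _; rewrite b4 //; exact: (hpi a).1.
have := hT P beta' hb'.
have E : \sum_(p <- s) beta' p.1 p.2 = \sum_(p <- s) beta p.1 p.2.
  by apply: eq_big_seq => p hp; rewrite /beta' piA //; exact: hsA.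
by rewrite E.
Qed.

Lemma fg_spanl (R : comPzRingType) (M : lmodType R) : fin_gen M -> exists g : seq M, forall m, spanl g m.
Proof.
move=> [g hg]; exists g => m; have [c [_ ->]] := hg m.
have hS : submodule (spanl g) by apply: spanB_sub; exact: zero_sub.
apply: (big_ind (spanl g)); [exact: sub0 | exact: subD |].
move=> i _; apply: subZ => //; apply: spanB_mem; [exact: zero_sub | exact: mem_nth].
Qed.

Lemma rel_ss_of_ss (R : comPzRingType) (M : lmodType R) : semisimple_mod M ->
  forall T : M -> Prop, submodule T -> rel_ss T.
Proof.
move=> hss T hT N hN hNT; have [C [hC hdec hcap]] := hss N hN.
exists (fun x => C x /\ T x); split.
- split.
  + split; exact: sub0.
  + move=> x y [h1 h2] [h3 h4]; split; exact: subD.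
  + move=> r x [h1 h2]; split; exact: subZ.
- by move=> x [].
- move=> x hx; have [a [b [ha hb ex]]] := hdec x.
  exists a, b; split => //; split => //.
  have -> : b = x - a by rewrite ex addrC addKr.
  apply: subB => //; exact: hNT.
- by move=> x hx [hc _]; exact: hcap.
Qed.

Lemma ss_fg (R : comPzRingType) (M : lmodType R) (hss : semisimple_mod M) (g : seq M) :
  (forall m, spanl g m) -> forall B : M -> Prop, submodule B -> exists p, forall x, B x <-> spanl p x.
Proof.
move=> hg B hB; have [C [hC hdec hcap]] := hss B hB.
have [p [hpB hgp]] : exists p : seq M, sub (spanl p) B /\
    forall x, spanl g x -> exists y z, [/\ spanl p y, C z & x = y + z].
  apply: dec_span => // h _.
  by have [a [b [ha hb ->]]] := hdec h; exists a; split => //; rewrite addrC addKr.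
exists p => x; split; last exact: hpB.
move=> hx; have [y [z [hy hz ex]]] := hgp x (hg x).
have z0 : z = 0.
  apply: hcap => //; have -> : z = x - y by rewrite ex addrC addKr.
  apply: subB => //; exact: hpB.
by rewrite ex z0 addr0.
Qed.

Definition gtS {R : comPzRingType} {M : lmodType R} (B' B : M -> Prop) :=
  submodule B' /\ sub B B' /\ exists x, B' x /\ ~ B x.

Lemma acc_all (R : comPzRingType) (M : lmodType R)
  (hN : forall B : M -> Prop, submodule B -> exists p, forall x, B x <-> spanl p x) :
  forall B : M -> Prop, submodule B -> Acc gtS B.
Proof.
move=> B0 hB0; apply: NNPP => hnacc.
have step : forall B : M -> Prop, ~ Acc gtS B -> exists B' : M -> Prop, gtS B' B /\ ~ Acc gtS B'.
  move=> B hB; apply: NNPP => h; apply: hB; constructor => B' hB'.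
  by apply: NNPP => h'; apply: h; exists B'.
pose next := fun B : M -> Prop => epsilon (inhabits B0) (fun B' => gtS B' B /\ ~ Acc gtS B').
have hnext : forall B : M -> Prop, ~ Acc gtS B -> gtS (next B) B /\ ~ Acc gtS (next B).
  by move=> B h; apply: (epsilon_spec (inhabits B0) (fun B' => gtS B' B /\ ~ Acc gtS B')); exact: step.
pose f := fun n => iter n next B0.
have hf : forall n, ~ Acc (@gtS R M) (f n) /\ submodule (f n).
  elim => [|n [IH1 IH2]] //=.
  by have [[h1 _] h2] := hnext _ IH1; split.
have hinc : forall n, sub (f n) (f n.+1) := fun n => (hnext _ (hf n).1).1.2.1.
have hmono : forall m n, (m <= n)%N -> sub (f m) (f n).
  move=> m; elim => [|n IH] hmn x hx.
  - by move: hmn; rewrite leqn0 => /eqP <-.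
  - move: hmn; rewrite leq_eqVlt => /orP [/eqP <- //|hlt].
    by apply: hinc; apply: IH.
pose U := fun x => exists n, f n x.
have hU : submodule U.
  split.
  - by exists 0%N; exact: sub0 (hf 0%N).2.
  - move=> x y [a ha] [b hb]; exists (maxn a b); apply: subD; first exact: (hf _).2.
    + exact: (hmono a) (leq_maxl a b) _ ha.
    + exact: (hmono b) (leq_maxr a b) _ hb.
  - by move=> r x [a ha]; exists a; apply: subZ => //; exact: (hf a).2.
have [p hp] := hN U hU.
have hfin : forall p' : seq M, (forall q, q \in p' -> U q) -> exists N, forall q, q \in p' -> f N q.
  elim => [|q p' IH] hq; first by exists 0%N.
  have [a ha] := hq q (mem_head _ _).
  have [N hN'] := IH (fun q' h => hq q' (ltac:(by rewrite inE h orbT))).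
  exists (maxn a N) => q'; rewrite inE => /orP [/eqP ->|h].
  - exact: (hmono a) (leq_maxl a N) _ ha.
  - apply: (hmono N) (leq_maxr a N) _ _; exact: hN'.
have [N hN'] := hfin p (fun q h => proj2 (hp q) (spanB_mem (zero_sub M) h)).
have hUN : sub U (f N).
  move=> x /hp; apply: spanB_min => //; first exact: (hf N).2.
  by move=> y ->; exact: sub0 (hf N).2.
have [_ [_ [x [hx1 hx2]]]] := (hnext _ (hf N).1).1.
by apply: hx2; apply: hUN; exists N.+1.
Qed.

Lemma maxP (R : comPzRingType) (M : lmodType R) (F : (M -> Prop) -> Prop) (B : M -> Prop) :
  Acc gtS B -> F B -> exists K, F K /\ forall K', F K' -> ~ gtS K' K.
Proof.
elim => {B} B _ IH hFB.
have [[K' [hF hgt]]|h] := classic (exists K', F K' /\ gtS K' B).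
- exact: IH hgt hF.
- exists B; split => // K' hK' hgt; apply: h; by exists K'.
Qed.

Lemma fin_chain (R : comPzRingType) (M : lmodType R) (hss : semisimple_mod M)
  (hN : forall B : M -> Prop, submodule B -> exists p, forall x, B x <-> spanl p x)
  (T : M -> Prop) : submodule T ->
  forall B : M -> Prop, submodule B -> sub B T ->
  exists c, chain B c /\ forall x, T x <-> spanB B c x.
Proof.
move=> hT B hB; have hacc := acc_all hN hB; move: hB.
elim: hacc => {B} B _ IH hB hBT.
have [hTB|[t [hTt hBt]]] : sub T B \/ exists t, T t /\ ~ B t.
  have [h|h] := classic (exists t, T t /\ ~ B t); [by right | left => x hx].
  by apply: NNPP => hx'; apply: h; exists x.
- by exists [::]; split => // x; split; [exact: hTB | exact: hBT].
pose F := fun K : M -> Prop => [/\ submodule K, sub B K, sub K T & exists x, T x /\ ~ K x].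
have [K [[hK hBK hKT [t0 [hTt0 hKt0]]] hmax]] : exists K, F K /\ forall K', F K' -> ~ gtS K' K.
  apply: (@maxP _ _ F B); first exact (acc_all hN hB).
  by split => //; exists t.
have ext : forall x, T x -> ~ K x -> forall y, T y -> addc K x y.
  move=> x hTx hKx y hTy; apply: NNPP => hy; apply: (hmax (addc K x)).
  + split.
    * exact: addc_sub.
    * move=> z hz; apply: addc_incl; exact: hBK.
    * move=> z [r [w [hw ->]]]; apply: subD => //; [exact: subZ | exact: hKT].
    * by exists y.
  + split; [exact: addc_sub | split; [exact: addc_incl | exists x; split => //; exact: addc_d]].
have [D [hD hDT hdec hcap]] := rel_ss_of_ss hss hT hK hKT.
have [k [d0 [hk hd0 ex]]] := hdec t0 hTt0.
have hKd0 : ~ K d0 by move=> h; apply: hKt0; rewrite ex; exact: subD.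
have hg : good B d0.
  split; first by move=> h; apply: hKd0; exact: hBK.
  exists (fun r => r *: d0 = 0); split.
  + split.
    * rewrite scale1r => h; apply: hKd0; rewrite h; exact: sub0.
    * move=> r hr.
      have hrK : ~ K (r *: d0) by move=> h; apply: hr; apply: hcap => //; exact: subZ.
      have [s [k' [hk' ex']]] := ext _ (hDT _ (subZ hD r hd0)) hrK d0 (hDT _ hd0).
      exists s; apply: hcap.
      -- have -> : (1 - s * r) *: d0 = k'.
           rewrite scalerBl scale1r -scalerA; apply/eqP; rewrite subr_eq addrC -ex'.
           done.
         exact: hk'.
      -- exact: subZ.
  + by move=> r ->; exact: sub0.
have hB1 : submodule (addc B d0) by exact: addc_sub.
have hgt : gtS (addc B d0) B.
  split => //; split; first exact: addc_incl.
  exists d0; split; [exact: addc_d | exact: hg.1].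
have hB1T : sub (addc B d0) T.
  move=> z [r [y [hy ->]]]; apply: subD => //; [apply: subZ => //; exact: hDT | exact: hBT].
have [c [hc hTc]] := IH _ hgt hB1 hB1T.
by exists (d0 :: c); split.
Qed.

Lemma ss_chain (R : comPzRingType) (M : lmodType R) (hss : semisimple_mod M) :
  fin_gen M -> exists c : seq M, chain zero c /\ forall x, spanl c x.
Proof.
move=> hfg; have [g hg] := fg_spanl hfg.
have [c [hc hiff]] := fin_chain hss (ss_fg hss hg) (T := fun _ => True) ltac:(split => //) (zero_sub M)
  ltac:(by []).
by exists c; split => // x; apply/hiff.
Qed.

Lemma ser_of_chain (R : comPzRingType) (M : lmodType R) (hss : semisimple_mod M) (c : seq M) :
  chain zero c -> (forall x, spanl c x) -> has_pure_comp_series_indec_cyclic M.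
Proof.
move=> hc hall; exists (size c), (fun i => spanl (take i c)); split.
- by move=> x; rewrite take0.
- by move=> x; rewrite take_size.
- move=> i _; apply: ss_pure => //; apply: spanB_sub; exact: zero_sub.
- move=> i hi x hx; rewrite (take_nth 0 hi) -cats1 /spanl spanB_cat /=; exact: addc_incl.
- move=> i hi; rewrite (take_nth 0 hi) -cats1 /spanl spanB_cat /=.
  have hg : good (spanB zero (take i c)) (nth 0 c i).
    move: (hc); rewrite -{1}(cat_take_drop i c) chain_cat (drop_nth 0 hi) /=; tauto.
  have hsub : submodule (spanB zero (take i c)) by apply: spanB_sub; exact: zero_sub.
  split; last exact: good_indec.
  exists (nth 0 c i); split => //; exact: addc_d.
Qed.

Lemma series_chain (R : comPzRingType) (hR : vN_regular R) (M : lmodType R) :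
  has_pure_comp_series_indec_cyclic M -> exists c : seq M, chain zero c /\ forall x, spanl c x.
Proof.
move=> [n [S [h0 hn hpure hmono hfac]]].
have main : forall k, (k <= n)%N -> exists c : seq M, chain zero c /\ forall x, S k x <-> spanl c x.
  elim => [|k IH] hk.
  - by exists [::]; split => // x; rewrite h0.
  - have [c [hc hSc]] := IH (ltnW hk).
    have [[m [hCm hiff]] hind] := hfac k hk.
    have eS : S k.+1 = addc (S k) m := predE hiff.
    have eSk : S k = spanl c := predE hSc.
    rewrite eS in hind.
    have hg := indec_good hR (hpure k (ltnW hk)).1 hind.
    exists (c ++ [:: m]); split.
    + by apply/chain_cat; split => //=; split => //; rewrite -/(spanl c) -eSk.
    + by move=> x; rewrite /spanl spanB_cat /= eS -/(spanl c) -eSk.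
have [c [hc hSc]] := main n (leqnn n).
by exists c; split => // x; apply/hSc.
Qed.

Lemma ss_of_rel (R : comPzRingType) (M : lmodType R) (X : M -> Prop) :
  (forall x, X x) -> rel_ss X -> semisimple_mod M.
Proof.
move=> hX hss A hA; have [C [hC _ hdec hcap]] := hss A hA (fun x _ => hX x).
by exists C; split => // x; apply: hdec.
Qed.

Lemma greedy (R : comPzRingType) (M : lmodType R) (c : seq M) : forall (B : M -> Prop),
  submodule B -> hyp B c -> exists c', chain B c' /\ forall x, spanB B c x <-> spanB B c' x.
Proof.
elim: c => [|d c IH] B hB /=; first by move=> _; exists [::].
move=> [[I [hmx hI]] hc].
have [hd|hd] := classic (B d).
- have E : addc B d = B.
    apply: predE => x; split; last exact: addc_incl.
    by move=> [r [y [hy ->]]]; apply: subD => //; exact: subZ.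
  rewrite E in hc *; exact: IH.
- have [c' [hc' hiff]] := IH (addc B d) (addc_sub d hB) hc.
  exists (d :: c'); split => //; split => //; split => //; by exists I.
Qed.

Lemma lift (R : comPzRingType) (M : lmodType R) (g : M) (u : seq R^o) :
  forall (BR : R^o -> Prop) (BM : M -> Prop), (forall r : R, BR r -> BM (r *: g)) ->
  chain BR u -> hyp BM (map (fun a : R => a *: g) u) /\
    (forall r : R, spanB BR u r -> spanB BM (map (fun a : R => a *: g) u) (r *: g)).
Proof.
elim: u => [|d u IH] BR BM hBM /=; first by move=> _; split.
move=> [[hd [I [hmx hI]]] hc].
have hBM' : forall r : R, addc BR d r -> addc BM (d *: g) (r *: g).
  move=> r [s [y [hy ->]]]; exists s, (y *: g); split; first exact: hBM.
  by rewrite scalerDl scalerA.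
have [h1 h2] := IH _ _ hBM' hc.
split => //; split => //; exists I; split => // r hr.
rewrite scalerA; exact: (hBM _ (hI r hr)).
Qed.

Lemma gens_hyp (R : comPzRingType) (M : lmodType R) (u : seq R^o)
  (hu : chain zero u) (hall : forall r, spanl u r) (gs : seq M) : forall (B : M -> Prop), submodule B ->
  hyp B (flatten [seq map (fun a : R => a *: g) u | g <- gs]) /\
  forall g, g \in gs -> spanB B (flatten [seq map (fun a : R => a *: g) u | g <- gs]) g.
Proof.
elim: gs => [|g gs IH] B hB /=; first by split.
have [h1 h2] := lift (g := g) (BM := B) (fun r (hr : r = 0) => ltac:(by rewrite hr scale0r; exact: sub0)) hu.
have hB' : submodule (spanB B (map (fun a : R => a *: g) u)) by exact: spanB_sub.
have [h3 h4] := IH _ hB'.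
split; first by apply/hyp_cat.
move=> g'; rewrite inE spanB_cat => /orP [/eqP ->|hg'].
- apply: spanB_incl; have := h2 1 (hall 1); by rewrite scale1r.
- exact: h4.
Qed.

Lemma fg_regular (R : comPzRingType) : fin_gen (R^o).
Proof.
exists [:: (1 : R^o)] => m; exists [:: m]; split => //.
by rewrite big_ord1 /=; apply/esym; exact: mulr1.
Qed.

Lemma ringss_chain (R : comPzRingType) (hssR : semisimple_ring R) (M : lmodType R) :
  fin_gen M -> exists c : seq M, chain zero c /\ forall x, spanl c x.
Proof.
move=> hfg.
have [u [hu hall]] := ss_chain hssR (fg_regular R).
have [gs hgs] := fg_spanl hfg.
have [h1 h2] := gens_hyp hu hall gs (zero_sub M).
have [c' [hc' hiff]] := greedy (zero_sub M) h1.
exists c'; split => // x; apply/hiff.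
apply: (spanB_min _ _ h2 (hgs x)).
- apply: spanB_sub; exact: zero_sub.
- move=> y ->; apply: sub0; apply: spanB_sub; exact: zero_sub.
Qed.

Theorem proposition2p10 (R : comPzRingType) (hR : vN_regular R) :
  (forall M : lmodType R, fin_gen M ->
     (has_pure_comp_series_indec_cyclic M <-> semisimple_mod M)) /\
  ((forall M : lmodType R, fin_gen M -> has_pure_comp_series_indec_cyclic M)
     <-> semisimple_ring R).
Proof.
have part1 : forall M : lmodType R, fin_gen M ->
     (has_pure_comp_series_indec_cyclic M <-> semisimple_mod M).
  move=> M hfg; split.
  - move=> hser; have [c [hc hall]] := series_chain hR hser.
    exact: (ss_of_rel hall (chain_ss hR hc)).
  - move=> hss; have [c [hc hall]] := ss_chain hss hfg.
    exact: (ser_of_chain hss hc hall).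
split => //; split.
- move=> H; apply/(part1 _ (fg_regular R)); exact: H (fg_regular R).
- move=> hssR M hfg; apply/(part1 _ hfg).
  have [c [hc hall]] := ringss_chain hssR hfg.
  exact: (ss_of_rel hall (chain_ss hR hc)).
Qed.
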